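(* Let $\gamma$ be a unit speed geodesic ($k_g\equiv 0$) on a smooth oriented surface $M\subset E^3$, with nowhere-vanishing normal curvature, whose position vector always lies in the plane spanned by $\{T,V\}$. Then $\gamma$ is an isophotic curve if and only if $\dfrac{\kappa^2}{(\kappa^2+\tau^2)^{3/2}}$ is a constant function of $s$, where $\kappa,\tau$ are the curvature and torsion of $\gamma$.
   Context: For a unit speed curve $\gamma$ on an oriented surface $M\subset E^3$, the Darboux frame is $T=\gamma'$, $U$ = unit normal of $M$ along $\gamma$, $V = U\times T$, satisfying $T' = k_g V + k_n U$, $V' = -k_g T + \tau_g U$, $U' = -k_n T - \tau_g V$; here $k_g$, $k_n$, $\tau_g$ are the geodesic curvature, normal curvature and geodesic torsion. The curve $\gamma$ is an isophotic curve if there is a fixed unit vector $d$ and a constant angle $\phi$ with $\langle U, d\rangle = \cos\phi$ along $\gamma$. ''Position vector lies in the plane spanned by $\{T,V\}$'' means $\gamma(s) = \mu_1(s)T(s) + \mu_2(s)V(s)$ for differentiable functions $\mu_1,\mu_2$. $\kappa,\tau$ denote the Frenet curvature and torsion of $\gamma$. *)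

(* Defs.v *)
From Stdlib Require Import Reals.
From Coquelicot Require Import Coquelicot.
Open Scope R_scope.

Definition vec3 : Type := (R * R * R)%type.

Definition mkv (x y z : R) : vec3 := (x, y, z).
Definition vx (v : vec3) : R := fst (fst v).
Definition vy (v : vec3) : R := snd (fst v).
Definition vz (v : vec3) : R := snd v.

Definition vadd (u v : vec3) : vec3 := mkv (vx u + vx v) (vy u + vy v) (vz u + vz v).
Definition vscale (a : R) (v : vec3) : vec3 := mkv (a * vx v) (a * vy v) (a * vz v).

Definition dot (u v : vec3) : R := vx u * vx v + vy u * vy v + vz u * vz v.
Definition cross (u v : vec3) : vec3 :=
  mkv (vy u * vz v - vz u * vy v)
      (vz u * vx v - vx u * vz v)
      (vx u * vy v - vy u * vx v).
Definition vnorm (v : vec3) : R := sqrt (dot v v).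

(** Frenet curvature and torsion of a curve, computed from its first three
    derivatives d1 = gamma', d2 = gamma'', d3 = gamma''' at a point:
    kappa = |gamma' x gamma''| / |gamma'|^3,
    tau   = <gamma' x gamma'', gamma'''> / |gamma' x gamma''|^2. *)
Definition frenet_curvature (d1 d2 : vec3) : R :=
  vnorm (cross d1 d2) / (vnorm d1) ^ 3.
Definition frenet_torsion (d1 d2 d3 : vec3) : R :=
  dot (cross d1 d2) d3 / (vnorm (cross d1 d2)) ^ 2.

(* Main.v *)
Require Import Defs.
From Stdlib Require Import Reals Lra Psatz.
From Coquelicot Require Import Coquelicot.
Open Scope R_scope.

Lemma loc_int a b s : a < s < b -> locally s (fun r => a < r < b).
Proof.
  intros Hs. apply (open_and _ _ (open_gt a) (open_lt b)). exact Hs.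
Qed.

Lemma const_int a b f s0 : (forall r, a<r<b -> is_derive f r 0) -> a<s0<b ->
  forall s, a<s<b -> f s = f s0.
Proof.
  intros Hd H0 s Hs.
  destruct (MVT_gen f s0 s (fun _ => 0)) as [c [_ Hc]].
  - intros x Hx. apply Hd. split.
    + apply Rlt_le_trans with (Rmin s0 s); [apply Rmin_glb_lt; lra| lra].
    + apply Rle_lt_trans with (Rmax s0 s); [lra| apply Rmax_lub_lt; lra].
  - intros x Hx. apply continuity_pt_filterlim. apply (ex_derive_continuous (V:=R_NormedModule) f x).
    exists 0. apply Hd. split.
    + apply Rlt_le_trans with (Rmin s0 s); [apply Rmin_glb_lt; lra| lra].
    + apply Rle_lt_trans with (Rmax s0 s); [lra| apply Rmax_lub_lt; lra].
  - lra.
Qed.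

Lemma der_fst {U W : NormedModule R_AbsRing} (F : R -> U * W) s L :
  is_derive F s L -> is_derive (fun r => fst (F r)) s (fst L).
Proof.
  intros H. unfold is_derive in *.
  apply (filterdiff_comp F (fun t => fst t) _ (fun t => fst t) H).
  apply filterdiff_linear. apply is_linear_fst.
Qed.

Lemma der_snd {U W : NormedModule R_AbsRing} (F : R -> U * W) s L :
  is_derive F s L -> is_derive (fun r => snd (F r)) s (snd L).
Proof.
  intros H. unfold is_derive in *.
  apply (filterdiff_comp F (fun t => snd t) _ (fun t => snd t) H).
  apply filterdiff_linear. apply is_linear_snd.
Qed.

Lemma dmul (f g : R -> R) s df dg : is_derive f s df -> is_derive g s dg ->
  is_derive (fun r => f r * g r) s (df * g s + f s * dg).
Proof. intros. apply (is_derive_mult f g s df dg); auto. intros; apply Rmult_comm. Qed.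

Lemma dadd (f g : R -> R) s df dg : is_derive f s df -> is_derive g s dg ->
  is_derive (fun r => f r + g r) s (df + dg).
Proof. intros. apply (is_derive_plus f g s df dg); auto. Qed.

Lemma dconst (c s : R) : is_derive (fun _ => c) s 0.
Proof. apply (is_derive_const c s). Qed.

Lemma did (s : R) : is_derive (fun r => r) s 1.
Proof. apply (is_derive_id s). Qed.

Lemma deq (f : R -> R) s l l' : is_derive f s l -> l = l' -> is_derive f s l'.
Proof. intros H ->; exact H. Qed.

Lemma duniq (f : R -> R) s l l' : is_derive f s l -> is_derive f s l' -> l = l'.
Proof. intros H1 H2. apply is_derive_unique in H1. apply is_derive_unique in H2. congruence. Qed.

Lemma dvx (F : R -> vec3) s L : is_derive F s L -> is_derive (fun r => vx (F r)) s (vx L).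
Proof. intros H. apply (der_fst (fun r => fst (F r))). apply (der_fst F). exact H. Qed.
Lemma dvy (F : R -> vec3) s L : is_derive F s L -> is_derive (fun r => vy (F r)) s (vy L).
Proof. intros H. apply (der_snd (fun r => fst (F r))). apply (der_fst F). exact H. Qed.
Lemma dvz (F : R -> vec3) s L : is_derive F s L -> is_derive (fun r => vz (F r)) s (vz L).
Proof. intros H. apply (der_snd F). exact H. Qed.

Lemma ddot (F G : R -> vec3) s F' G' : is_derive F s F' -> is_derive G s G' ->
  is_derive (fun r => dot (F r) (G r)) s (dot F' (G s) + dot (F s) G').
Proof.
  intros HF HG. unfold dot.
  apply dvx in HF as Fx. apply dvy in HF as Fy. apply dvz in HF as Fz.
  apply dvx in HG as Gx. apply dvy in HG as Gy. apply dvz in HG as Gz.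
  eapply deq.
  - apply dadd; [apply dadd|]; apply dmul; eassumption.
  - cbv beta. match goal with |- ?x = ?y => change (@eq R x y) end. ring.
Qed.

Ltac req := cbv beta; match goal with |- ?x = ?y => change (@eq R x y) end.

Lemma ddotc (F : R -> vec3) d s F' : is_derive F s F' ->
  is_derive (fun r => dot (F r) d) s (dot F' d).
Proof.
  intros HF. eapply deq. apply (ddot F (fun _ => d) s F' zero HF).
  - apply is_derive_const.
  - req. unfold dot, vx, vy, vz. simpl. unfold zero; simpl. ring.
Qed.

Ltac vunf := unfold dot, cross, vadd, vscale, mkv, vx, vy, vz; simpl.

Lemma dot_comm u v : dot u v = dot v u.
Proof. vunf; ring. Qed.
Lemma dot_lin2 a X b Y w : dot (vadd (vscale a X) (vscale b Y)) w = a * dot X w + b * dot Y w.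
Proof. vunf; ring. Qed.
Lemma dot_lin3 a X b Y c Z w :
  dot (vadd (vscale a X) (vadd (vscale b Y) (vscale c Z))) w = a * dot X w + b * dot Y w + c * dot Z w.
Proof. vunf; ring. Qed.
Lemma dot_lin3r a X b Y c Z w :
  dot w (vadd (vscale a X) (vadd (vscale b Y) (vscale c Z))) = a * dot w X + b * dot w Y + c * dot w Z.
Proof. vunf; ring. Qed.
Lemma dot_scale_l a X w : dot (vscale a X) w = a * dot X w.
Proof. vunf; ring. Qed.

Lemma gram U T d : (dot d (cross U T))^2 =
  dot U U * (dot T T * dot d d - dot T d * dot d T)
  - dot U T * (dot T U * dot d d - dot T d * dot d U)
  + dot U d * (dot T U * dot d T - dot T T * dot d U).
Proof. destruct U as [[u1 u2] u3]; destruct T as [[t1 t2] t3]; destruct d as [[d1 d2] d3]; vunf; ring. Qed.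

Lemma frame T U : dot T T = 1 -> dot U U = 1 -> dot T U = 0 ->
  dot (cross U T) (cross U T) = 1 /\ dot (cross U T) T = 0 /\ dot (cross U T) U = 0 /\
  (forall d, dot d d = (dot T d)^2 + (dot (cross U T) d)^2 + (dot U d)^2).
Proof.
  intros H1 H2 H3.
  assert (E1 : dot (cross U T) (cross U T) = dot U U * dot T T - dot U T ^ 2)
    by (destruct U as [[u1 u2] u3]; destruct T as [[t1 t2] t3]; vunf; ring).
  assert (E2 : dot (cross U T) T = 0)
    by (destruct U as [[u1 u2] u3]; destruct T as [[t1 t2] t3]; vunf; ring).
  assert (E3 : dot (cross U T) U = 0)
    by (destruct U as [[u1 u2] u3]; destruct T as [[t1 t2] t3]; vunf; ring).
  rewrite (dot_comm U T) in E1. rewrite H1, H2, H3 in E1.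
  split; [lra|]. split; [exact E2|]. split; [exact E3|].
  intros d. pose proof (gram U T d) as G.
  rewrite (dot_comm U T), H1, H2, H3, (dot_comm d (cross U T)), (dot_comm d T), (dot_comm d U) in G.
  rewrite G. ring.
Qed.

Lemma rp32 A : 0 < A -> Rpower A (3/2) = A * sqrt A.
Proof.
  intros H. replace (3/2) with (1 + /2) by field.
  rewrite Rpower_plus, Rpower_1, Rpower_sqrt; auto.
Qed.

Lemma qlem kn tg t : kn <> 0 -> tg = - t * kn ->
  let q := kn ^ 2 / Rpower (kn ^ 2 + tg ^ 2) (3/2) in
  0 < q /\ q ^ 2 * (kn ^ 2 * (1 + t ^ 2) ^ 3) = 1.
Proof.
  intros Hk Ht q.
  assert (HA : 0 < kn ^ 2 + tg ^ 2) by nra.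
  unfold q. rewrite rp32 by exact HA.
  pose proof (sqrt_lt_R0 _ HA) as Hs. pose proof (sqrt_sqrt _ (Rlt_le _ _ HA)) as Hss.
  split.
  - apply Rdiv_lt_0_compat; [nra|]. apply Rmult_lt_0_compat; auto.
  - assert (E: (kn ^ 2 / ((kn ^ 2 + tg ^ 2) * sqrt (kn ^ 2 + tg ^ 2))) ^ 2
          = kn^4 / (kn ^ 2 + tg ^ 2)^3).
    { transitivity (kn ^ 4 / ((kn ^ 2 + tg ^ 2) ^ 2 * (sqrt (kn ^ 2 + tg ^ 2) * sqrt (kn ^ 2 + tg ^ 2)))); [field; split; lra|].
      rewrite Hss. field. lra. }
    rewrite E. subst tg. field; repeat split; try nra; auto.
Qed.

Lemma cross_lem T U kn : cross T (vadd (vscale 0 (cross U T)) (vscale kn U)) = vscale (-kn) (cross U T).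
Proof. destruct U as [[u1 u2] u3]; destruct T as [[t1 t2] t3]; vunf. f_equal; [f_equal|]; ring. Qed.
Lemma dot_scale2 a X : dot (vscale a X) (vscale a X) = a * a * dot X X.
Proof. vunf; ring. Qed.

Theorem corollary4p1
  (a b : R) (gamma T V U g2 g3 : R -> vec3) (kg kn tg : R -> R) :
  a < b ->
  (forall s, a < s < b ->
     is_derive gamma s (T s) /\
     dot (T s) (T s) = 1 /\ dot (U s) (U s) = 1 /\ dot (T s) (U s) = 0 /\
     V s = cross (U s) (T s) /\
     is_derive T s (g2 s) /\
     g2 s = vadd (vscale (kg s) (V s)) (vscale (kn s) (U s)) /\
     is_derive V s (vadd (vscale (- kg s) (T s)) (vscale (tg s) (U s))) /\
     is_derive U s (vadd (vscale (- kn s) (T s)) (vscale (- tg s) (V s))) /\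
     is_derive g2 s (g3 s)) ->
  (forall s, a < s < b -> kg s = 0) ->
  (forall s, a < s < b -> kn s <> 0) ->
  (exists mu1 mu2 : R -> R,
     (forall s, a < s < b -> ex_derive mu1 s /\ ex_derive mu2 s) /\
     (forall s, a < s < b ->
        gamma s = vadd (vscale (mu1 s) (T s)) (vscale (mu2 s) (V s)))) ->
  ((exists (d : vec3) (phi : R), vnorm d = 1 /\
      forall s, a < s < b -> dot (U s) d = cos phi)
   <->
   (exists c : R, forall s, a < s < b ->
      let kappa := frenet_curvature (T s) (g2 s) in
      let tau := frenet_torsion (T s) (g2 s) (g3 s) in
      kappa ^ 2 / Rpower (kappa ^ 2 + tau ^ 2) (3 / 2) = c)).
Proof.
  intros Hab Hf Hkg Hkn [mu1 [mu2 [_ Hmu]]].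
  assert (Fr : forall s, a<s<b -> dot (T s) (T s) = 1 /\ dot (U s) (U s) = 1 /\ dot (T s) (U s) = 0 /\
     dot (V s) (V s) = 1 /\ dot (V s) (T s) = 0 /\ dot (V s) (U s) = 0 /\
     forall d, dot d d = (dot (T s) d)^2 + (dot (V s) d)^2 + (dot (U s) d)^2).
  { intros s Hs. destruct (Hf s Hs) as (_ & H1 & H2 & H3 & HV & _).
    rewrite HV. destruct (frame _ _ H1 H2 H3) as (A1 & A2 & A3 & A4). tauto. }
  assert (Fg2 : forall s w, a<s<b -> dot (g2 s) w = kn s * dot (U s) w).
  { intros s w Hs. destruct (Hf s Hs) as (_ & _ & _ & _ & _ & _ & Hg2 & _).
    rewrite Hg2, dot_lin2, (Hkg s Hs). ring. }
  assert (FdT : forall s w, a<s<b -> is_derive (fun r => dot (T r) w) s (kn s * dot (U s) w)).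
  { intros s w Hs. destruct (Hf s Hs) as (_ & _ & _ & _ & _ & HdT & _).
    rewrite <- (Fg2 s w Hs). apply ddotc. exact HdT. }
  assert (FdV : forall s w, a<s<b -> is_derive (fun r => dot (V r) w) s (tg s * dot (U s) w)).
  { intros s w Hs. destruct (Hf s Hs) as (_ & _ & _ & _ & _ & _ & _ & HdV & _).
    eapply deq. apply ddotc. exact HdV. req. rewrite dot_lin2, (Hkg s Hs). ring. }
  assert (FdU : forall s w, a<s<b -> is_derive (fun r => dot (U r) w) s
                  (- kn s * dot (T s) w - tg s * dot (V s) w)).
  { intros s w Hs. destruct (Hf s Hs) as (_ & _ & _ & _ & _ & _ & _ & _ & HdU & _).
    eapply deq. apply ddotc. exact HdU. req. rewrite dot_lin2. ring. }
  assert (gU : forall s, a<s<b -> dot (gamma s) (U s) = 0).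
  { intros s Hs. rewrite (Hmu s Hs), dot_lin2. destruct (Fr s Hs) as (_ & _ & H3 & _ & _ & H6 & _).
    rewrite H3, H6. ring. }
  set (m1 := fun r => dot (gamma r) (T r)).
  set (m2 := fun r => dot (gamma r) (V r)).
  assert (Dm1 : forall s, a<s<b -> is_derive m1 s 1).
  { intros s Hs. destruct (Hf s Hs) as (Hg & H1 & _ & _ & _ & HdT & _).
    eapply deq. apply ddot. exact Hg. exact HdT.
    req. rewrite (dot_comm (gamma s)), Fg2, (dot_comm (U s)), gU, H1 by exact Hs. ring. }
  assert (Dm2 : forall s, a<s<b -> is_derive m2 s 0).
  { intros s Hs. destruct (Hf s Hs) as (Hg & _ & _ & _ & _ & _ & _ & HdV & _).
    eapply deq. apply ddot. exact Hg. exact HdV.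
    req. rewrite (dot_comm (gamma s)), dot_lin2, (dot_comm (U s)), gU, (Hkg s Hs) by exact Hs.
    destruct (Fr s Hs) as (_ & _ & _ & _ & H5 & _). rewrite dot_comm, H5. ring. }
  assert (Rel : forall s, a<s<b -> kn s * m1 s + tg s * m2 s = 0).
  { intros s Hs. destruct (Hf s Hs) as (Hg & _ & _ & H3 & _ & _ & _ & _ & HdU & _).
    assert (D1 : is_derive (fun r => dot (gamma r) (U r)) s
                   (dot (T s) (U s) + dot (gamma s) (vadd (vscale (- kn s) (T s)) (vscale (- tg s) (V s))))).
    { apply ddot; assumption. }
    assert (D2 : is_derive (fun r => dot (gamma r) (U r)) s 0).
    { apply is_derive_ext_loc with (fun _ => 0).
      - apply (filter_imp (fun r => a < r < b)); [|apply loc_int; exact Hs].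
        intros r Hr. symmetry. apply gU. exact Hr.
      - apply dconst. }
    pose proof (duniq _ _ _ _ D1 D2) as E.
    rewrite (dot_comm (gamma s)), dot_lin2, H3 in E. unfold m1, m2.
    rewrite (dot_comm (gamma s) (T s)), (dot_comm (gamma s) (V s)). lra. }
  set (s0 := (a+b)/2).
  assert (Hs0 : a < s0 < b) by (unfold s0; lra).
  set (C2 := m2 s0).
  assert (Hm2 : forall s, a<s<b -> m2 s = C2) by (intros s Hs; exact (const_int a b m2 s0 Dm2 Hs0 s Hs)).
  assert (HC2 : C2 <> 0).
  { intro H0. assert (Z : forall s, a<s<b -> m1 s = 0).
    { intros s Hs. pose proof (Rel s Hs) as E. rewrite (Hm2 s Hs), H0 in E.
      apply (Rmult_eq_reg_l (kn s)); [|exact (Hkn s Hs)]. lra. }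
    assert (D : is_derive m1 s0 0).
    { apply is_derive_ext_loc with (fun _ => 0).
      - apply (filter_imp (fun r => a < r < b)); [|apply loc_int; exact Hs0].
        intros r Hr. symmetry. apply Z. exact Hr.
      - apply dconst. }
    pose proof (duniq _ _ _ _ (Dm1 s0 Hs0) D). lra. }
  set (t := fun r => m1 r / C2).
  assert (Dt : forall s, a<s<b -> is_derive t s (/ C2)).
  { intros s Hs. eapply deq. apply (dmul m1 (fun _ => / C2)). apply Dm1; auto. apply dconst. req. ring. }
  assert (Htg : forall s, a<s<b -> tg s = - t s * kn s).
  { intros s Hs. pose proof (Rel s Hs) as E. rewrite (Hm2 s Hs) in E.
    unfold t. apply (Rmult_eq_reg_r C2); [|exact HC2]. unfold Rdiv.
    replace (- (m1 s * / C2) * kn s * C2) with (- m1 s * kn s * (/C2 * C2)) by ring.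
    rewrite Rinv_l by exact HC2. lra. }
  assert (DVg3 : forall s, a<s<b -> dot (V s) (g3 s) = - tg s * kn s).
  { intros s Hs. destruct (Hf s Hs) as (_ & _ & _ & _ & _ & _ & _ & HdV & _ & Hdg2).
    pose proof (ddot V g2 s _ _ HdV Hdg2) as D1.
    assert (D2 : is_derive (fun r => dot (V r) (g2 r)) s 0).
    { apply is_derive_ext_loc with (fun _ => 0).
      - apply (filter_imp (fun r => a<r<b)); [|apply loc_int; exact Hs]. intros r Hr. req.
        rewrite dot_comm, (Fg2 r _ Hr). destruct (Fr r Hr) as (_&_&_&_&_&H6&_).
        rewrite dot_comm, H6. ring.
      - apply dconst. }
    pose proof (duniq _ _ _ _ D1 D2) as E.
    rewrite dot_lin2, (Hkg s Hs), (dot_comm (U s)), (Fg2 s _ Hs) in E.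
    destruct (Fr s Hs) as (_&H2&_). rewrite H2 in E. nra. }
  assert (Hkt : forall s, a<s<b -> frenet_curvature (T s) (g2 s) ^ 2 = kn s ^ 2 /\
                 frenet_torsion (T s) (g2 s) (g3 s) = tg s).
  { intros s Hs. destruct (Hf s Hs) as (_ & _ & _ & _ & HV & _ & Hg2 & _).
    destruct (Fr s Hs) as (H1&_&_&H4&_).
    unfold frenet_curvature, frenet_torsion.
    rewrite Hg2, (Hkg s Hs), HV, cross_lem, <- HV.
    unfold vnorm. rewrite dot_scale2, H4, H1, sqrt_1, dot_scale_l, (DVg3 s Hs).
    replace (- kn s * - kn s * 1) with (kn s * kn s) by ring.
    assert (Hk := Hkn s Hs).
    pose proof (sqrt_sqrt (kn s * kn s) ltac:(nra)) as SS.
    split.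
    - replace ((sqrt (kn s * kn s) / 1 ^ 3) ^ 2) with (sqrt (kn s * kn s) * sqrt (kn s * kn s)) by field.
      rewrite SS. ring.
    - replace (sqrt (kn s * kn s) ^ 2) with (sqrt (kn s * kn s) * sqrt (kn s * kn s)) by ring.
      rewrite SS. field. auto. }
  set (K := fun r => kn r ^ 2 * (1 + t r ^ 2) ^ 3).
  set (q := fun r => kn r ^ 2 / Rpower (kn r ^ 2 + tg r ^ 2) (3/2)).
  assert (HqK : forall s, a<s<b -> 0 < q s /\ q s ^ 2 * K s = 1).
  { intros s Hs. exact (qlem (kn s) (tg s) (t s) (Hkn s Hs) (Htg s Hs)). }
  assert (Hgoal : forall s, a<s<b ->
     frenet_curvature (T s) (g2 s) ^ 2 /
       Rpower (frenet_curvature (T s) (g2 s) ^ 2 + frenet_torsion (T s) (g2 s) (g3 s) ^ 2) (3 / 2) = q s).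
  { intros s Hs. destruct (Hkt s Hs) as [E1 E2]. rewrite E1, E2. reflexivity. }
  assert (KtoQ : (forall s, a<s<b -> K s = K s0) -> forall s, a<s<b -> q s = q s0).
  { intros HK s Hs. destruct (HqK s Hs) as [P1 Q1]. destruct (HqK s0 Hs0) as [P2 Q2].
    rewrite (HK s Hs) in Q1.
    assert (E : q s ^ 2 = q s0 ^ 2).
    { apply (Rmult_eq_reg_r (K s0)). lra. intro Z. rewrite Z in Q2. lra. }
    nra. }
  split.
  - intros [d [phi [Hd HUd]]].
    assert (Hdd : dot d d = 1).
    { assert (0 <= dot d d) by (destruct d as [[d1 d2] d3]; vunf; nra).
      unfold vnorm in Hd. rewrite <- (sqrt_sqrt (dot d d)) by auto. rewrite Hd. ring. }
    set (z := cos phi) in *.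
    assert (Key : forall s, a<s<b -> C2 ^ 2 * z ^ 2 * K s = 1 - z ^ 2 /\ z <> 0).
    { intros s Hs.
      assert (DU0 : is_derive (fun r => dot (U r) d) s 0).
      { apply is_derive_ext_loc with (fun _ => z).
        - apply (filter_imp (fun r => a<r<b)); [|apply loc_int; exact Hs]. intros r Hr.
          symmetry. apply HUd. exact Hr.
        - apply dconst. }
      pose proof (duniq _ _ _ _ (FdU s d Hs) DU0) as E1.
      rewrite (Htg s Hs) in E1.
      assert (Ex : dot (T s) d = t s * dot (V s) d).
      { apply (Rmult_eq_reg_l (kn s)); [|exact (Hkn s Hs)]. lra. }
      assert (Dx : is_derive (fun r => dot (T r) d) s (/ C2 * dot (V s) d + t s * (tg s * dot (U s) d))).
      { apply is_derive_ext_loc with (fun r => t r * dot (V r) d).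
        - apply (filter_imp (fun r => a<r<b)); [|apply loc_int; exact Hs]. intros r Hr. req.
          destruct (Hf r Hr) as (_ & _ & _ & _ & _ & _ & _ & _ & HdU & _).
          pose proof (duniq _ _ _ _ (FdU r d Hr) (is_derive_ext_loc (fun _ => z) _ r 0
            (filter_imp (fun r => a<r<b) _ (fun u Hu => eq_sym (HUd u Hu)) (loc_int a b r Hr)) (dconst z r))) as E2.
          rewrite (Htg r Hr) in E2.
          apply (Rmult_eq_reg_l (kn r)); [|exact (Hkn r Hr)]. lra.
        - apply dmul. apply Dt; auto. apply FdV; auto. }
      pose proof (duniq _ _ _ _ (FdT s d Hs) Dx) as E3.
      rewrite (HUd s Hs), (Htg s Hs) in E3.
      assert (Ey : dot (V s) d = C2 * kn s * z * (1 + t s ^ 2)).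
      { apply (Rmult_eq_reg_l (/ C2)); [|apply Rinv_neq_0_compat; exact HC2].
        replace (/ C2 * (C2 * kn s * z * (1 + t s ^ 2))) with (kn s * z * (1 + t s ^ 2)) by (field; exact HC2).
        nra. }
      destruct (Fr s Hs) as (_&_&_&_&_&_&Hdec). pose proof (Hdec d) as Dd.
      rewrite Hdd, (HUd s Hs), Ex, Ey in Dd. fold z in Dd.
      split.
      - unfold K. nra.
      - intro Z. rewrite Z in Dd. lra. }
    exists (q s0). intros s Hs. cbv zeta. rewrite (Hgoal s Hs). apply KtoQ; auto.
    intros r Hr. destruct (Key r Hr) as [A1 Az]. destruct (Key s0 Hs0) as [A2 _].
    apply (Rmult_eq_reg_l (C2 ^ 2 * z ^ 2)). lra.
    apply Rmult_integral_contrapositive_currified; apply pow_nonzero; auto.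
  - intros [c Hc].
    assert (Hqc : forall s, a<s<b -> q s = c).
    { intros s Hs. rewrite <- (Hgoal s Hs). exact (Hc s Hs). }
    assert (HK : forall s, a<s<b -> K s = K s0).
    { intros s Hs. destruct (HqK s Hs) as [P1 Q1]. destruct (HqK s0 Hs0) as [P2 Q2].
      rewrite (Hqc s Hs) in P1, Q1. rewrite (Hqc s0 Hs0) in Q2.
      apply (Rmult_eq_reg_l (c^2)). lra. apply pow_nonzero; lra. }
    set (K0 := K s0) in *.
    set (kn1 := fun s => dot (g3 s) (U s) + dot (g2 s) (vadd (vscale (- kn s) (T s)) (vscale (- tg s) (V s)))).
    assert (Dkn : forall s, a<s<b -> is_derive kn s (kn1 s)).
    { intros s Hs. destruct (Hf s Hs) as (_&_&_&_&_&_&_&_&HdU&Hdg2).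
      apply is_derive_ext_loc with (fun r => dot (g2 r) (U r)).
      - apply (filter_imp (fun r => a<r<b)); [|apply loc_int; exact Hs]. intros r Hr. req.
        rewrite (Fg2 r _ Hr). destruct (Fr r Hr) as (_&H2&_). rewrite H2. ring.
      - apply ddot; auto. }
    set (W := fun r => 1 + t r * t r).
    assert (DW : forall s, a<s<b -> is_derive W s (0 + (/ C2 * t s + t s * / C2))).
    { intros s Hs. apply dadd. apply dconst. apply dmul; apply Dt; auto. }
    assert (Rk : forall s, a<s<b -> kn1 s * W s = - 3 * kn s * t s / C2).
    { intros s Hs.
      assert (D1 : is_derive (fun r => kn r * kn r * (W r * W r * W r)) s
         ((kn1 s * kn s + kn s * kn1 s) * (W s * W s * W s) + kn s * kn s *
          (((0 + (/ C2 * t s + t s * / C2)) * W s + W s * (0 + (/ C2 * t s + t s * / C2))) * W s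
            + W s * W s * (0 + (/ C2 * t s + t s * / C2))))).
      { eapply deq. apply dmul. apply dmul; apply Dkn; auto. apply dmul. apply dmul; apply DW; auto. apply DW; auto.
        req. ring. }
      assert (D2 : is_derive (fun r => kn r * kn r * (W r * W r * W r)) s 0).
      { apply is_derive_ext_loc with (fun _ => K0).
        - apply (filter_imp (fun r => a<r<b)); [|apply loc_int; exact Hs]. intros r Hr. req.
          rewrite <- (HK r Hr). unfold K, W. ring.
        - apply dconst. }
      pose proof (duniq _ _ _ _ D1 D2) as E.
      assert (HW : 0 < W s) by (unfold W; nra).
      assert (E' : 2 * kn s * (W s * W s) * (kn1 s * W s + 3 * kn s * t s / C2) = 0).
      { rewrite <- E. unfold W. field. exact HC2. }
      apply Rmult_integral in E'. destruct E' as [E'|E']; [|lra].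
      exfalso. apply Rmult_integral in E'. destruct E' as [E'|E']; [|nra].
      apply Rmult_integral in E'. destruct E' as [E'|E']; [lra|]. exact (Hkn s Hs E'). }
    assert (HK0 : 0 <= K0).
    { unfold K0, K. apply Rmult_le_pos; [nra| apply pow_le; nra]. }
    set (S := 1 + C2 ^ 2 * K0).
    assert (HS : 1 <= S) by (unfold S; nra).
    set (z0 := / sqrt S).
    assert (Hsq : 1 <= sqrt S) by (rewrite <- sqrt_1; apply sqrt_le_1_alt; lra).
    assert (Hz0 : 0 < z0 <= 1).
    { unfold z0; split; [apply Rinv_0_lt_compat; lra | rewrite <- Rinv_1; apply Rinv_le_contravar; lra]. }
    assert (Hz2 : z0 ^ 2 * S = 1).
    { unfold z0. pose proof (sqrt_sqrt S ltac:(lra)) as E.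
      transitivity (S / (sqrt S * sqrt S)); [field; lra|]. rewrite E. field. lra. }
    set (Y := fun r => C2 * kn r * z0 * W r).
    set (X := fun r => t r * Y r).
    set (f := fun e r => X r * dot (T r) e + Y r * dot (V r) e + z0 * dot (U r) e).
    assert (DY : forall s, a<s<b -> is_derive Y s (- z0 * kn s * t s)).
    { intros s Hs. eapply deq. apply dmul. apply dmul. apply dmul. apply dconst. apply Dkn; auto.
      apply dconst. apply DW; auto.
      req. assert (HW : 0 < W s) by (unfold W; nra).
      replace (kn1 s) with (-3 * kn s * t s / C2 / W s) by (rewrite <- (Rk s Hs); field; lra).
      field. split; lra. }
    assert (DX : forall s, a<s<b -> is_derive X s (z0 * kn s)).
    { intros s Hs. eapply deq. apply dmul. apply Dt; auto. apply DY; auto.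
      req. unfold Y, W. field. exact HC2. }
    assert (Df : forall e s, a<s<b -> is_derive (f e) s 0).
    { intros e s Hs. eapply deq. apply dadd; [apply dadd|]; apply dmul.
      apply DX; auto. apply FdT; auto. apply DY; auto. apply FdV; auto. apply dconst. apply FdU; auto.
      req. rewrite (Htg s Hs). unfold X. ring. }
    assert (Fconst : forall e r, a<r<b -> f e r = f e s0).
    { intros e r Hr. exact (const_int a b (f e) s0 (Df e) Hs0 r Hr). }
    set (d := vadd (vscale (X s0) (T s0)) (vadd (vscale (Y s0) (V s0)) (vscale z0 (U s0)))).
    exists d, (acos z0). split.
    + unfold vnorm. destruct (Fr s0 Hs0) as (H1&H2&H3&H4&H5&H6&Hdec).
      rewrite (Hdec d). unfold d. rewrite !dot_lin3r.
      rewrite H1, H2, H3, H4, H5, H6, (dot_comm (T s0) (V s0)), (dot_comm (U s0) (T s0)),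
        (dot_comm (U s0) (V s0)), H5, H6, H3.
      replace ((X s0 * 1 + Y s0 * 0 + z0 * 0) ^ 2 + (X s0 * 0 + Y s0 * 1 + z0 * 0) ^ 2 +
               (X s0 * 0 + Y s0 * 0 + z0 * 1) ^ 2) with (z0 ^ 2 * S).
      * rewrite Hz2. apply sqrt_1.
      * unfold X, Y, S, K0, K, W. ring.
    + intros r Hr. rewrite cos_acos by lra. pose proof (Fconst (U r) r Hr) as E.
      unfold f in E. destruct (Fr r Hr) as (H1&H2&H3&H4&H5&H6&_).
      rewrite (dot_comm (T r) (U r)) in H3.
      rewrite dot_comm, H3, H6, H2 in E. unfold d. rewrite dot_comm, dot_lin3. lra.
Qed.
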